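(* Let $a_1\ge1$ and $n \ge 3$ be integers, and suppose that $p$ is an odd primitive divisor of $\ell_n$ with $(D \mid p) = 1$. Then there exists $\bm{x} \in \mathcal{L}(f)$ such that $\tau(\bm{x}; p) = \rho(\bm{x}; p) = 2n$ and $x_j \not\equiv 0 \pmod p$ for all $j \ge 0$. Moreover, if $n$ is odd, then there exists $\bm{y} \in \mathcal{L}(f)$ such that $\tau(\bm{y}; p) = \rho(\bm{y}; p) = n$ and $y_j \not\equiv 0 \pmod p$ for all $j\ge0$.
   Context: Let $f := X^2 - a_1X - 1$, $D := a_1^2+4$, and $\alpha,\beta$ the roots of $f$ ($\alpha\beta=-1$, $\alpha+\beta=a_1$). $\mathcal{L}(f)$ is the set of integer sequences $\bm{x}=(x_n)_{n\ge0}$ with $x_{n+2} = a_1x_{n+1} + x_n$ for all $n\ge0$. For an integer $m\ge1$, $\tau(\bm{x}; m)$ is the minimal integer $t \ge 1$ with $x_{n+t}\equiv x_n \pmod m$ for all sufficiently large $n$, and $\rho(\bm{x};m) := \#\{x_n \bmod m : n\ge 0\}$. The Lehmer sequence is $\ell_n := \frac{\alpha^n - (-\beta)^n}{\alpha + \beta}$ for odd $n$ and $\ell_n := \frac{\alpha^n - (-\beta)^n}{\alpha^2 - \beta^2}$ for even $n$ (integers). A prime $p$ is a primitive divisor of $\ell_n$ if $p \mid \ell_n$ but $p \nmid (\alpha^2-\beta^2)^2\ell_1\cdots\ell_{n-1}$, where $(\alpha^2-\beta^2)^2 = a_1^2D$. $(D\mid p)$ is the Legendre symbol. *)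

(* Defs.v *)
From HB Require Import structures.
From mathcomp Require Import all_boot all_order all_algebra all_field.
Set Implicit Arguments. Unset Strict Implicit. Unset Printing Implicit Defensive.
Import Order.TTheory GRing.Theory Num.Theory.
Local Open Scope ring_scope.

(* f = X^2 - a1 X - 1, D = a1^2 + 4 (as an integer). *)
Definition discr (a1 : int) : int := a1 ^+ 2 + 4.

Definition inL (a1 : int) (x : nat -> int) : Prop :=
  forall k : nat, x k.+2 = a1 * x k.+1 + x k.

Definition ev_period_mod (x : nat -> int) (m : int) (t : nat) : Prop :=
  exists N : nat, forall k : nat, (N <= k)%N -> (x (k + t)%N == x k %[mod m])%Z.

Definition is_tau (x : nat -> int) (m : int) (t : nat) : Prop :=
  [/\ (0 < t)%N, ev_period_mod x m t &
      forall s : nat, (0 < s)%N -> ev_period_mod x m s -> (t <= s)%N].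

Definition is_rho (x : nat -> int) (m : int) (r : nat) : Prop :=
  exists s : seq int, [/\ uniq s, size s = r &
      forall z : int, z \in s <-> exists k : nat, z = (x k %% m)%Z].

Definition alphaC (a1 : int) : algC := (a1%:~R + sqrtC (discr a1)%:~R) / 2.
Definition betaC (a1 : int) : algC := (a1%:~R - sqrtC (discr a1)%:~R) / 2.

Definition lehmer (a1 : int) (k : nat) : algC :=
  let a := alphaC a1 in let b := betaC a1 in
  if odd k then (a ^+ k - (- b) ^+ k) / (a + b)
  else (a ^+ k - (- b) ^+ k) / (a ^+ 2 - b ^+ 2).

Definition primitive_divisor (a1 : int) (p : nat) (k : nat) : Prop :=
  let a := alphaC a1 in let b := betaC a1 in
  (p%:R %| lehmer a1 k)%C /\
  ~ (p%:R %| (a ^+ 2 - b ^+ 2) ^+ 2 * \prod_(1 <= i < k) lehmer a1 i)%C.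

Definition legendre_is_one (d : int) (p : nat) : Prop :=
  ~ (p%:Z %| d)%Z /\ exists y : int, (y ^+ 2 == d %[mod p%:Z])%Z.

(* Main.v *)
Require Import Defs.
From HB Require Import structures.
From mathcomp Require Import all_boot all_order all_algebra all_field.
From mathcomp Require Import ring.
Import Order.TTheory GRing.Theory Num.Theory.
Set Implicit Arguments. Unset Strict Implicit. Unset Printing Implicit Defensive.
Local Open Scope ring_scope.
From mathcomp Require Import zify.

Fixpoint L4 (D : int) (k : nat) : int * int * int * int :=
  match k with
  | 0 => (0, 1, 1, D - 1)
  | k'.+1 => let: (a, b, c, e) := L4 D k' in (b, c, e, (D - 2) * c - a)
  end.
Definition Lq (D : int) (k : nat) : int := (L4 D k).1.1.1.

Lemma L4E D k : L4 D k = (Lq D k, Lq D k.+1, Lq D k.+2, Lq D k.+3).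
Proof.
elim: k => [//|k IH].
rewrite /Lq /= IH /=. rewrite /Lq /= IH /=. rewrite /Lq /= IH /=.
rewrite /Lq /= IH /=. done.
Qed.

Lemma Lq4 D k : Lq D k.+4 = (D - 2) * Lq D k.+2 - Lq D k.
Proof. by rewrite {1}/Lq /= L4E. Qed.

Definition lehF (F : fieldType) (g d : F) (k : nat) : F :=
  if odd k then (g ^+ k - d ^+ k) / (g - d)
  else (g ^+ k - d ^+ k) / (g ^+ 2 - d ^+ 2).

Lemma lehF_L (F : fieldType) (a1 : int) (g d : F) :
  g * d = 1 -> g - d = a1%:~R -> g - d != 0 -> g + d != 0 ->
  forall k, lehF g d k = (Lq (discr a1) k)%:~R.
Proof.
move=> gd1 gda nz1 nz2.
have nz3 : g ^+ 2 - d ^+ 2 != 0.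
  by rewrite (_ : g ^+ 2 - d ^+ 2 = (g - d) * (g + d)) ?mulf_neq0 //; ring.
have sum2 : g ^+ 2 + d ^+ 2 = (discr a1 - 2)%:~R.
  rewrite /discr rmorphB rmorphD /= rmorphXn /= -gda.
  have -> : (4%:~R : F) = 4 * (g * d) by rewrite gd1 mulr1.
  have -> : (2%:~R : F) = 2 * (g * d) by rewrite gd1 mulr1.
  ring.
have N4 : forall k, g ^+ k.+4 - d ^+ k.+4 =
   (g ^+ 2 + d ^+ 2) * (g ^+ k.+2 - d ^+ k.+2) - (g * d) ^+ 2 * (g ^+ k - d ^+ k).
  by move=> k; rewrite !exprS; ring.
have step : forall k, lehF g d k.+4 = (discr a1 - 2)%:~R * lehF g d k.+2 - lehF g d k.
  move=> k; rewrite /lehF /= N4 gd1 expr1n mul1r sum2 !negbK.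
  by case: (odd k) => /=; rewrite mulrBl mulrA.
suff H : forall k, [/\ lehF g d k = (Lq (discr a1) k)%:~R,
   lehF g d k.+1 = (Lq (discr a1) k.+1)%:~R,
   lehF g d k.+2 = (Lq (discr a1) k.+2)%:~R &
   lehF g d k.+3 = (Lq (discr a1) k.+3)%:~R].
  by move=> k; case: (H k).
elim=> [|k [h0 h1 h2 h3]].
  split.
  - by rewrite /lehF /= !expr0 subrr mul0r.
  - by rewrite /lehF /= !expr1 divff.
  - by rewrite /lehF /= divff.
  - rewrite /lehF /= (_ : Lq (discr a1) 3 = (discr a1 - 2) + 1); last first.
      by rewrite /Lq /=; ring.
    rewrite rmorphD /= -sum2 rmorph1.
    apply: (mulIf nz1); rewrite divfK //.
    transitivity ((g ^+ 2 + d ^+ 2 + g * d) * (g - d)); first ring.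
    by rewrite gd1.
split=> //.
by rewrite step h2 h0 Lq4 [in RHS]intrD [in RHS]intrN [in RHS]intrM.
Qed.

Section AlgC.
Variable a1 : int.
Hypothesis a1pos : 1 <= a1.
Let al := alphaC a1.
Let be := betaC a1.
Let s := sqrtC ((discr a1)%:~R : algC).

Lemma s2 : s ^+ 2 = (discr a1)%:~R.
Proof. by rewrite /s sqrtCK. Qed.

Lemma s_neq0 : s != 0.
Proof.
apply/eqP=> s0; have := s2; rewrite s0 expr0n /= => /eqP.
rewrite eq_sym intr_eq0 /discr => /eqP h.
have : 0 < a1 ^+ 2 + 4 :> int by apply: ltr_wpDl; rewrite ?sqr_ge0.
by rewrite h ltxx.
Qed.

Lemma a1C_neq0 : (a1%:~R : algC) != 0.
Proof. by rewrite intr_eq0; apply/eqP=> h; move: a1pos; rewrite h. Qed.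

Lemma alpha_sum : al - (- be) = a1%:~R.
Proof. rewrite /al /be /alphaC /betaC -/s opprK; field; by rewrite ?pnatr_eq0. Qed.

Lemma alpha_diff : al + (- be) = s.
Proof. rewrite /al /be /alphaC /betaC -/s; field; by rewrite ?pnatr_eq0. Qed.

Lemma alpha_prod : al * (- be) = 1.
Proof.
rewrite /al /be /alphaC /betaC -/s.
transitivity ((s ^+ 2 - (a1%:~R) ^+ 2) / 4 : algC); first (field; by rewrite ?pnatr_eq0).
by rewrite s2 /discr intrD rmorphXn addrC addKr (_ : (4%:~R : algC) = 4) // divff // (pnatr_eq0 _ 4).
Qed.

Lemma lehmerE k : lehmer a1 k = (Lq (discr a1) k)%:~R.
Proof.
rewrite -(lehF_L alpha_prod alpha_sum); last 2 first.
- by rewrite alpha_sum a1C_neq0.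
- by rewrite alpha_diff s_neq0.
by rewrite /lehmer /lehF -/al -/be opprK sqrrN.
Qed.

Lemma sqdiffE : (al ^+ 2 - be ^+ 2) ^+ 2 = (a1 ^+ 2 * discr a1)%:~R.
Proof.
rewrite intrM rmorphXn /= -s2 -alpha_sum -alpha_diff; ring.
Qed.
End AlgC.
Section Ord.
Variable F : fieldType.

Lemma ord_from (g : F) (n : nat) : (0 < n)%N -> g ^+ (2 * n) = 1 ->
  (forall k, (0 < k < n)%N -> g ^+ (2 * k) != 1) ->
  forall m, (g ^+ (2 * m) == 1) = (n %| m)%N.
Proof.
move=> n0 gn gk m.
have E : g ^+ (2 * m) = g ^+ (2 * (m %% n)).
  rewrite {1}(divn_eq m n) (_ : (2 * (m %/ n * n + m %% n) = 2 * n * (m %/ n) + 2 * (m %% n))%N); last by lia.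
  by rewrite exprD exprM gn expr1n mul1r.
rewrite E /dvdn; case: (eqVneq (m %% n)%N 0%N) => [->|r0]; first by rewrite muln0 expr0 !eqxx.
apply/negbTE/gk; apply/andP; split; first by lia.
by rewrite ltn_mod.
Qed.

Lemma ord2n (g : F) (n : nat) : (-1 : F) != 1 ->
  (forall m, (g ^+ (2 * m) == 1) = (n %| m)%N) -> g ^+ n = -1 ->
  forall m, (g ^+ m == 1) = (2 * n %| m)%N.
Proof.
move=> m11 H gn m; apply/idP/idP.
  move=> /eqP gm.
  have : (n %| m)%N by rewrite -H mulnC exprM gm expr1n.
  case/dvdnP=> q mq; move: gm; rewrite mq mulnC exprM gn -signr_odd.
  case oq: (odd q); first by rewrite expr1 => /eqP; rewrite (negbTE m11).
  move=> _; apply/dvdnP; exists (q./2).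
  rewrite -{1}(odd_double_half q) oq add0n -muln2; lia.
case/dvdnP=> q ->; rewrite mulnC exprM.
by have := H n; rewrite dvdnn => /eqP ->; rewrite expr1n.
Qed.

Lemma ordn (g : F) (n : nat) :
  (forall m, (g ^+ (2 * m) == 1) = (n %| m)%N) -> g ^+ n = 1 ->
  forall m, (g ^+ m == 1) = (n %| m)%N.
Proof.
move=> H gn m; apply/idP/idP.
  by move=> /eqP gm; rewrite -H mulnC exprM gm expr1n.
by case/dvdnP=> q ->; rewrite mulnC exprM gn expr1n.
Qed.
End Ord.

Section Build.
Variable p : nat.
Hypothesis pr : prime p.
Local Notation K := 'F_p.

Lemma dvdFp (z : int) : (p%:Z %| z)%Z = (z%:~R == 0 :> K).
Proof. exact: (dvdz_pcharf (pchar_Fp pr)). Qed.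

Lemma modFp (a b : int) : (a == b %[mod p%:Z])%Z = (a%:~R == b%:~R :> K).
Proof. by rewrite eqz_mod_dvd dvdFp rmorphB /= subr_eq0. Qed.

Fixpoint xpair (a1 h : int) (k : nat) : int * int :=
  match k with
  | 0 => (1, h)
  | k'.+1 => let: (u, v) := xpair a1 h k' in (v, a1 * v + u)
  end.
Definition xseq a1 h k := (xpair a1 h k).1.

Lemma xpairE a1 h k : xpair a1 h k = (xseq a1 h k, xseq a1 h k.+1).
Proof. elim: k => [//|k IH]; rewrite /xseq /= IH /=. done. Qed.

Lemma xseqS a1 h k : xseq a1 h k.+2 = a1 * xseq a1 h k.+1 + xseq a1 h k.
Proof. by rewrite {1}/xseq /= xpairE. Qed.

Lemma xseq0 a1 h : xseq a1 h 0 = 1. Proof. by []. Qed.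
Lemma xseq1 a1 h : xseq a1 h 1 = h. Proof. by []. Qed.

Lemma build (a1 : int) (h : K) (T : nat) : (0 < T)%N ->
  h ^+ 2 = a1%:~R * h + 1 -> (forall m, (h ^+ m == 1) = (T %| m)%N) ->
  exists x : nat -> int, [/\ inL a1 x, is_tau x p%:Z T,
      is_rho x p%:Z T & forall j : nat, ~~ (p%:Z %| x j)%Z].
Proof.
move=> T0 h2 hord.
pose hz : int := (nat_of_ord h)%:Z.
have hzE : (hz%:~R : K) = h by exact: natr_Zp.
pose x := xseq a1 hz.
have xE : forall k, ((x k)%:~R : K) = h ^+ k.
  suff : forall k, ((x k)%:~R : K) = h ^+ k /\ ((x k.+1)%:~R : K) = h ^+ k.+1.
    by move=> H k; case: (H k).
  elim=> [|k [IH1 IH2]]; first by rewrite /x xseq0 xseq1 hzE expr0 expr1.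
  split=> //; rewrite /x xseqS -/x intrD intrM IH1 IH2 !exprS mulrA -expr2 h2.
  ring.
have hT : h ^+ T = 1 by apply/eqP; rewrite hord dvdnn.
have h0 : h != 0.
  by apply/eqP=> h0; move: hT; rewrite h0 expr0n eqn0Ngt T0 /= => /eqP; rewrite eq_sym oner_eq0.
have hpow : forall i j, (h ^+ i == h ^+ j) = (i == j %[mod T])%N.
  move=> i j; wlog ij : i j / (i <= j)%N.
    move=> W; case/orP: (leq_total i j) => [|ji]; first exact: W.
    by rewrite eq_sym W // eq_sym.
  rewrite [in RHS]eq_sym eqn_mod_dvd // -hord.
  have -> : h ^+ j = h ^+ (j - i) * h ^+ i by rewrite -exprD subnK.
  by rewrite -{1}[h ^+ i]mul1r (inj_eq (mulIf (expf_neq0 i h0))) eq_sym.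
exists x; split.
- by move=> k; rewrite /x xseqS.
- split=> //.
  + by exists 0%N => k _; rewrite modFp !xE exprD hT mulr1.
  + move=> s s0 [N HN]; move: (HN N (leqnn N)); rewrite modFp !xE.
    rewrite hpow -{2}(addn0 N) eqn_modDl mod0n => /eqP sT.
    by apply: dvdn_leq => //; rewrite /dvdn sT.
- exists [seq (x k %% p%:Z)%Z | k <- iota 0 T]; split.
  + rewrite map_inj_in_uniq ?iota_uniq // => i j; rewrite !mem_iota !add0n.
    move=> /andP[_ iT] /andP[_ jT] /eqP; rewrite -/(_ == _ %[mod _])%Z modFp !xE.
    by rewrite hpow !modn_small // => /eqP.
  + by rewrite size_map size_iota.
  + move=> z; split.
      by case/mapP=> k _ ->; exists k.
    case=> k ->; apply/mapP; exists (k %% T)%N.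
      by rewrite mem_iota add0n ltn_mod T0.
    apply/eqP; rewrite -/(_ == _ %[mod _])%Z modFp !xE hpow modn_mod //.
- by move=> j; rewrite dvdFp xE expf_neq0.
Qed.


Lemma inv_one (R : comNzRingType) (x y : R) : x * y = 1 -> (x == 1) = (y == 1).
Proof.
move=> xy; apply/eqP/eqP=> [x1|y1]; first by rewrite x1 mul1r in xy.
by rewrite y1 mulr1 in xy.
Qed.

Hypothesis podd : odd p.

Lemma core (a1 y : int) (n : nat) : (0 < n)%N ->
  (y ^+ 2 == discr a1 %[mod p%:Z])%Z -> ~~ (p%:Z %| discr a1)%Z ->
  ~~ (p%:Z %| a1)%Z -> (p%:Z %| Lq (discr a1) n)%Z ->
  (forall k, (0 < k < n)%N -> ~~ (p%:Z %| Lq (discr a1) k)%Z) ->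
  (exists h : K, h ^+ 2 = a1%:~R * h + 1 /\
       forall m, (h ^+ m == 1) = (2 * n %| m)%N) /\
  (odd n -> exists h : K, h ^+ 2 = a1%:~R * h + 1 /\
       forall m, (h ^+ m == 1) = (n %| m)%N).
Proof.
move=> n0 yD nD na pLn pLk.
have two_nz : (2 : K) != 0.
  rewrite -(dvdn_pcharf (pchar_Fp pr)); apply/negP=> /dvdn_leq-/(_ isT) p2.
  have := prime_gt1 pr; move: podd; case: p p2 => [|[|[|]]] //.
have four_nz : (4 : K) != 0.
  by rewrite (_ : (4 : K) = 2 * 2); [rewrite mulf_neq0 | ring].
have m11 : (-1 : K) != 1.
  apply/eqP=> e; move/eqP: two_nz; apply.
  by rewrite (_ : (2 : K) = 1 - (-1)); [rewrite e subrr | ring].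
set a : K := a1%:~R; set c : K := y%:~R; set Dk : K := (discr a1)%:~R.
have c2 : c ^+ 2 = Dk by apply/eqP; rewrite /c /Dk -rmorphXn /= -modFp.
have DkE : Dk = a ^+ 2 + 4 by rewrite /Dk /discr intrD rmorphXn.
have Dk0 : Dk != 0 by rewrite /Dk -dvdFp.
have a0 : a != 0 by rewrite /a -dvdFp.
have c0 : c != 0 by apply/eqP=> c0; move: c2; rewrite c0 expr0n /= => /esym/eqP; rewrite (negbTE Dk0).
pose g := (a + c) / 2; pose d := (c - a) / 2.
have gd : g * d = 1.
  transitivity ((c ^+ 2 - a ^+ 2) / 4); first by rewrite /g /d; field; apply/andP; split; [exact: four_nz | exact: two_nz].
  by rewrite c2 DkE addrC addKr divff.
have gda : g - d = a by rewrite /g /d; field; exact: two_nz.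
have gdc : g + d = c by rewrite /g /d; field; exact: two_nz.
have gd0 : g - d != 0 by rewrite gda.
have gd0' : g + d != 0 by rewrite gdc.
have L := lehF_L gd gda gd0 gd0'.
have Z : forall k, ((Lq (discr a1) k)%:~R == 0 :> K) = (g ^+ (2 * k) == 1).
  move=> k; rewrite -L /lehF.
  have den : (if odd k then g - d else g ^+ 2 - d ^+ 2) != 0.
    case: (odd k) => //; rewrite (_ : g ^+ 2 - d ^+ 2 = (g - d) * (g + d)); last by ring.
    by rewrite mulf_neq0.
  have -> : (if odd k then (g ^+ k - d ^+ k) / (g - d)
             else (g ^+ k - d ^+ k) / (g ^+ 2 - d ^+ 2)) =
            (g ^+ k - d ^+ k) / (if odd k then g - d else g ^+ 2 - d ^+ 2).
    by case: (odd k).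
  rewrite mulf_eq0 invr_eq0 (negbTE den) orbF subr_eq0.
  have gdk : g ^+ k * d ^+ k = 1 by rewrite -exprMn gd expr1n.
  rewrite mul2n -addnn exprD; apply/eqP/eqP=> [e|e].
    by rewrite {2}e gdk.
  by rewrite -[LHS]mulr1 -gdk mulrA e mul1r.
have Hg : forall m, (g ^+ (2 * m) == 1) = (n %| m)%N.
  apply: ord_from => //.
    by apply/eqP; rewrite -Z -dvdFp.
  by move=> k kn; rewrite -Z -dvdFp; apply: pLk.
have groot : g ^+ 2 = a * g + 1.
  by rewrite -gda -gd; ring.
pose h := - d.
have hroot : h ^+ 2 = a * h + 1.
  by rewrite /h -gda -gd; ring.
have Hh : forall m, (h ^+ (2 * m) == 1) = (n %| m)%N.
  move=> m; rewrite -Hg exprM /h sqrrN -exprM.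
  by apply: inv_one; rewrite -exprMn mulrC gd expr1n.
have gdn : g ^+ n * d ^+ n = 1 by rewrite -exprMn gd expr1n.
have gn2 : (g ^+ n) ^+ 2 == 1 by rewrite -exprM mulnC Hg dvdnn.
rewrite sqrf_eq1 in gn2; case/orP: gn2 => /eqP gn.
  have nodd : odd n.
    case ne: (odd n) => //; have := Hg n./2.
    have -> : (2 * n./2 = n)%N.
      by rewrite -[in RHS](odd_double_half n) ne add0n -muln2 mulnC.
    rewrite gn eqxx => /esym/dvdn_leq.
    have e2 : n = (n./2 + n./2)%N.
      by rewrite addnn -[in LHS](odd_double_half n) ne add0n.
    have n1 : (0 < n./2)%N by rewrite lt0n; apply/eqP=> e0; move: n0; rewrite e2 e0.
    move=> /(_ n1); lia.
  have dn : d ^+ n = 1 by rewrite gn mul1r in gdn.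
  split.
    exists h; split=> //; apply: ord2n => //.
    by rewrite /h exprNn dn mulr1 -signr_odd nodd expr1.
  by move=> _; exists g; split=> //; apply: ordn.
have dn : d ^+ n = -1.
  by rewrite gn mulN1r in gdn; rewrite -[d ^+ n]opprK gdn.
split.
  by exists g; split=> //; apply: ord2n.
move=> nodd; exists h; split=> //; apply: ordn => //.
by rewrite /h exprNn dn -signr_odd nodd expr1 mulN1r opprK.
Qed.
End Build.

Lemma dvdC_intr (p : nat) (z : int) : (p%:R %| (z%:~R : algC))%C = (p%:Z %| z)%Z.
Proof. by rewrite dvdC_int ?intr_int // intrKfloor dvdzE. Qed.

Unset Implicit Arguments.

Theorem mainTheorem11 (a1 : int) (n p : nat) :
  1 <= a1 -> (3 <= n)%N -> prime p -> odd p ->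
  primitive_divisor a1 p n -> legendre_is_one (discr a1) p ->
  (exists x : nat -> int, [/\ inL a1 x, is_tau x p%:Z (2 * n)%N,
      is_rho x p%:Z (2 * n)%N & forall j : nat, ~~ (p%:Z %| x j)%Z]) /\
  (odd n -> exists y : nat -> int, [/\ inL a1 y, is_tau y p%:Z n,
      is_rho y p%:Z n & forall j : nat, ~~ (p%:Z %| y j)%Z]).
Proof.
move=> a1pos n3 pr podd [hd hnot] [nD [y yD]].
rewrite /= (lehmerE a1pos) dvdC_intr in hd.
move: hnot; rewrite /= sqdiffE.
rewrite (eq_bigr (fun i => (Lq (discr a1) i)%:~R)); last by move=> i _; rewrite (lehmerE a1pos).
rewrite -rmorph_prod -intrM dvdC_intr => /negP.
rewrite (dvdFp pr) !rmorphM rmorph_prod /= !mulf_eq0 !negb_or => /andP[/andP[na _] nprod].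
have n0 : (0 < n)%N by apply: leq_trans n3.
have na' : ~~ (p%:Z %| a1)%Z by rewrite (dvdFp pr); case/andP: na.
have pLk : forall k, (0 < k < n)%N -> ~~ (p%:Z %| Lq (discr a1) k)%Z.
  move=> k /andP[k0 kn]; rewrite (dvdFp pr).
  move: nprod; rewrite prodf_seq_neq0 => /allP/(_ k).
  by rewrite mem_index_iota k0 kn => /(_ isT).
have [[h [hr ho]] H2] := core pr podd n0 yD (introN idP nD) na' hd pLk.
split.
  apply: (build pr _ hr ho); lia.
move=> nodd; have [h' [hr' ho']] := H2 nodd.
exact: (build pr n0 hr' ho').
Qed.
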